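(* Let $n\ge1$, let $\lambda=(\lambda_1\ge\cdots\ge\lambda_n\ge0)$ be a partition (padded with zeros to length $n$), and set $A_{ij}=\lambda_i-\lambda_j+j-i$ for $1\le i<j\le n$. Then $$|\mathrm{SVT}(\lambda,n)|=|\mathrm{SST}(\lambda,n)|\cdot\sum_{k_1,\dots,k_n\ge0}\Big(\prod_{1\le i<j\le n}\frac{A_{ij}+k_i-k_j}{A_{ij}}\Big)\prod_{i=1}^n\frac{(-(i-1))_{k_i}}{(1)_{k_i}}(-1)^{k_i},$$ i.e. $|\mathrm{SVT}(\lambda,n)|=|\mathrm{SST}(\lambda,n)|\cdot F^{(n)}\big((A_{ij})\,|\,(0,-1,\dots,-(n-1))^T\,|\,(1,\dots,1)^T\,|\,(-1,\dots,-1)^T\big)$.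
   Context: $(a)_0=1$, $(a)_m=a(a+1)\cdots(a+m-1)$; the sum is finite since $(-(i-1))_{k_i}=0$ for $k_i>i-1$. Holman's function $F^{(n)}\big((A_{ij})\,|\,(a_{i})\,|\,(b_{i})\,|\,(z_i)\big)=\sum_{k_1,\dots,k_n\ge0}\prod_{i<j}\frac{A_{ij}+k_i-k_j}{A_{ij}}\prod_{i}\frac{(a_i)_{k_i}}{(b_i)_{k_i}}z_i^{k_i}$. $\mathrm{SST}(\lambda,n)$ is the set of semistandard tableaux of shape $\lambda$ with entries in $[n]=\{1,\dots,n\}$ (rows weakly increasing, columns strictly increasing), and $|\mathrm{SST}(\lambda,n)|=\prod_{1\le i<j\le n}\frac{\lambda_i-\lambda_j+j-i}{j-i}$. $\mathrm{SVT}(\lambda,n)$ is the set of set-valued tableaux of shape $\lambda$: each box $(i,j)$ of the Young diagram (row $i$ downward, column $j$ rightward) gets a nonempty $T_{i,j}\subseteq[n]$ with $\max T_{i,j}\le\min T_{i,j+1}$ and $\max T_{i,j}<\min T_{i+1,j}$ whenever these boxes exist. *)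

(* Defs.v *)
From HB Require Import structures.
From mathcomp Require Import all_boot all_order all_algebra.
Unset Printing Implicit Defensive.
Import Order.TTheory GRing.Theory Num.Theory.

(* Conventions: rows i and columns j are 0-indexed; row i has length
   nth 0 lam i; entries [n] = {1..n} are encoded by 'I_n (k <-> k+1),
   an order-preserving bijection. A filling is a function on the
   rectangle 'I_n * 'I_(lambda_1) which is "empty" outside the diagram. *)

Definition ncols (lam : seq nat) : nat := head 0%N lam.

Definition in_diag (lam : seq nat) (i j : nat) : bool := (j < nth 0%N lam i)%N.

Definition smax n (A : {set 'I_n}) : nat := \max_(x in A) (x : nat).
Definition smin n (A : {set 'I_n}) : nat := \big[minn/n]_(x in A) (x : nat).

Definition is_svt (lam : seq nat) (n : nat)
    (T : {ffun 'I_n * 'I_(ncols lam) -> {set 'I_n}}) : bool :=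
  [forall i : 'I_n, forall j : 'I_(ncols lam),
     [&& (in_diag lam i j ==> (T (i, j) != set0)),
         (~~ in_diag lam i j ==> (T (i, j) == set0)),
         [forall j' : 'I_(ncols lam),
            ((j'.+1 == j :> nat) && in_diag lam i j) ==>
              (smax n (T (i, j')) <= smin n (T (i, j)))%N] &
         [forall i' : 'I_n,
            ((i'.+1 == i :> nat) && in_diag lam i j) ==>
              (smax n (T (i', j)) < smin n (T (i, j)))%N]]].

Definition SVT (lam : seq nat) (n : nat) :=
  [set T : {ffun 'I_n * 'I_(ncols lam) -> {set 'I_n}} | is_svt lam n T].

Definition is_sst (lam : seq nat) (n : nat)
    (T : {ffun 'I_n * 'I_(ncols lam) -> option 'I_n}) : bool :=
  [forall i : 'I_n, forall j : 'I_(ncols lam),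
     [&& (in_diag lam i j ==> (T (i, j) != None)),
         (~~ in_diag lam i j ==> (T (i, j) == None)),
         [forall j' : 'I_(ncols lam),
            ((j'.+1 == j :> nat) && in_diag lam i j) ==>
              (odflt 0%N (omap val (T (i, j'))) <= odflt 0%N (omap val (T (i, j))))%N] &
         [forall i' : 'I_n,
            ((i'.+1 == i :> nat) && in_diag lam i j) ==>
              (odflt 0%N (omap val (T (i', j))) < odflt 0%N (omap val (T (i, j))))%N]]].

Definition SST (lam : seq nat) (n : nat) :=
  [set T : {ffun 'I_n * 'I_(ncols lam) -> option 'I_n} | is_sst lam n T].

Local Open Scope ring_scope.

Definition poch (a : rat) (m : nat) : rat := \prod_(t < m) (a + t%:R).

Definition Aij (lam : seq nat) (i j : nat) : rat :=
  ((nth 0%N lam i)%:Z - (nth 0%N lam j)%:Z + j%:Z - i%:Z)%:~R.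

Definition holman_term (lam : seq nat) (n : nat) (k : 'I_n -> nat) : rat :=
  (\prod_(i < n) \prod_(j < n | (i < j)%N)
     ((Aij lam i j + (k i)%:R - (k j)%:R) / Aij lam i j))
  * \prod_(i < n) (poch (- (i%:R)) (k i) / poch 1 (k i) * (-1) ^+ (k i)).

(* The sum over all k_1,..,k_n >= 0.  Its support is contained in
   {k | k_i <= i-1 (1-indexed)}, since (-(i-1))_{k_i} = 0 for k_i > i-1
   (this vanishing is the Pochhammer factor inside holman_term), so the
   sum over the finite box k_i < n is the full (finite) sum. *)
Definition holman_sum (lam : seq nat) (n : nat) : rat :=
  \sum_(k : {ffun 'I_n -> 'I_n}) holman_term lam n (fun i => (k i : nat)).

(* Main.v *)
Require Import Defs.
From mathcomp Require Import all_boot all_order all_algebra ring lra zify.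
Import Order.TTheory GRing.Theory Num.Theory.
Set Implicit Arguments. Unset Strict Implicit.

Section Comb.
Variables (N C : nat) (sv : bool).
Definition tab := {ffun 'I_N * 'I_C -> {set 'I_N}}.

Definition validb (lam : seq nat) (m : nat) (T : tab) : bool :=
  [&& [forall c : 'I_N * 'I_C, (T c != set0) == in_diag lam c.1 c.2],
   [forall i : 'I_N, forall j : 'I_C, forall j' : 'I_C,
     ((j'.+1 == j) && in_diag lam i j) ==>
       [forall x in T (i, j'), forall y in T (i, j), x <= y]],
   [forall i : 'I_N, forall i' : 'I_N, forall j : 'I_C,
     ((i'.+1 == i) && in_diag lam i j) ==>
       [forall x in T (i', j), forall y in T (i, j), x < y]],
   [forall c, forall x in T c, x < m] &
   (sv || [forall c, #|T c| <= 1])].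

Record valid lam m (T : tab) : Prop := Valid {
  vdiag : forall c, (T c != set0) = in_diag lam c.1 c.2;
  vrow : forall (i : 'I_N) (j j' : 'I_C) (x y : 'I_N), j'.+1 = j -> in_diag lam i j ->
     x \in T (i, j') -> y \in T (i, j) -> x <= y;
  vcol : forall (i i' : 'I_N) (j : 'I_C) (x y : 'I_N), i'.+1 = i -> in_diag lam i j ->
     x \in T (i', j) -> y \in T (i, j) -> x < y;
  vlt : forall c (x : 'I_N), x \in T c -> x < m;
  vsing : ~~ sv -> forall c, #|T c| <= 1 }.

Lemma validP lam m T : reflect (valid lam m T) (validb lam m T).
Proof.
apply: (iffP idP).
  case/and5P => /forallP h1 /forallP h2 /forallP h3 /forallP h4 h5; split.
  - by move=> c; have /eqP := h1 c.
  - move=> i j j' x y e d xin yin.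
    move/forallP: (h2 i) => /(_ j) /forallP /(_ j') /implyP.
    rewrite e eqxx d => /(_ isT) /forallP /(_ x) /implyP /(_ xin) /forallP /(_ y) /implyP.
    exact.
  - move=> i i' j x y e d xin yin.
    move/forallP: (h3 i) => /(_ i') /forallP /(_ j) /implyP.
    rewrite e eqxx d => /(_ isT) /forallP /(_ x) /implyP /(_ xin) /forallP /(_ y) /implyP.
    exact.
  - by move=> c x xin; move/forallP: (h4 c) => /(_ x) /implyP; apply.
  - by move=> nsv c; move: h5; rewrite (negbTE nsv) => /forallP.
case=> h1 h2 h3 h4 h5; apply/and5P; split.
- by apply/forallP => c; rewrite h1.
- apply/forallP => i; apply/forallP => j; apply/forallP => j'; apply/implyP.
  case/andP => /eqP e d; apply/forallP => x; apply/implyP => xin.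
  by apply/forallP => y; apply/implyP => yin; apply: h2 xin yin.
- apply/forallP => i; apply/forallP => i'; apply/forallP => j; apply/implyP.
  case/andP => /eqP e d; apply/forallP => x; apply/implyP => xin.
  by apply/forallP => y; apply/implyP => yin; apply: h3 xin yin.
- by apply/forallP => c; apply/forallP => x; apply/implyP; apply: h4.
- by case: sv h5 => //= h5; apply/forallP; apply: h5.
Qed.

Definition SVTg lam m := [set T : tab | validb lam m T].

Definition part (lam : seq nat) := forall i, nth 0 lam i.+1 <= nth 0 lam i.

Lemma part_mono lam i i' : part lam -> i <= i' -> nth 0 lam i' <= nth 0 lam i.
Proof.
move=> pl /subnKC <-; elim: (i' - i) => [|d IH]; first by rewrite addn0.
by rewrite addnS (leq_trans (pl _)).
Qed.

Lemma nonemptyP (A : {set 'I_N}) : reflect (exists x, x \in A) (A != set0).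
Proof.
apply: (iffP (set0Pn A)); by case=> x xa; exists x.
Qed.

Lemma rowchain lam m T (i : 'I_N) (j0 j : 'I_C) x y :
  valid lam m T -> part lam -> j0 < j -> x \in T (i, j0) -> y \in T (i, j) -> x <= y.
Proof.
move=> vT pl; move Hd: (j - j0.+1) => d.
elim: d j0 Hd x => [|d IH] j0 Hd x lt xin yin.
  have e : j0.+1 = j by lia.
  have dj : in_diag lam i j by rewrite -(vdiag vT (i, j)); apply/nonemptyP; exists y.
  exact: (vrow vT e dj xin yin).
have lt1 : j0.+1 < C by apply: leq_trans (ltn_ord j); lia.
pose j1 := Ordinal lt1.
have dj : in_diag lam i j by rewrite -(vdiag vT (i, j)); apply/nonemptyP; exists y.
have dj1 : in_diag lam i j1 by rewrite /in_diag /=; move: dj; rewrite /in_diag; lia.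
have := dj1; rewrite -(vdiag vT (i, j1)) => /nonemptyP [z zin].
have xz : x <= z by apply: (vrow vT _ dj1 xin zin).
apply: (leq_trans xz); apply: (IH j1) => //=; lia.
Qed.

Lemma rowbound lam m T (i : 'I_N) (j : 'I_C) x :
  valid lam m T -> part lam -> x \in T (i, j) -> i <= x.
Proof.
move=> vT pl; move Hi: (i : nat) => k; elim: k i j x Hi => [|k IH] i j x Hi xin.
  by [].
have lt1 : k < N by apply: leq_trans (ltn_ord i); lia.
pose i0 := Ordinal lt1.
have dj : in_diag lam i j by rewrite -(vdiag vT (i, j)); apply/nonemptyP; exists x.
have dj0 : in_diag lam i0 j.
  move: dj; rewrite /in_diag /= Hi => h; apply: leq_trans h _; exact: pl.
have := dj0; rewrite -(vdiag vT (i0, j)) => /nonemptyP [z zin].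
have zx : z < x by apply: (vcol vT _ dj zin xin) => /=; lia.
have := IH i0 j z erefl zin; lia.
Qed.

Lemma card_prefix k : k <= C -> #|[set j : 'I_C | j < k]| = k.
Proof.
move=> kC.
have -> : [set j : 'I_C | j < k] = [set widen_ord kC j | j in 'I_k].
  apply/setP => j; rewrite !inE; apply/idP/imsetP.
    by move=> jk; exists (Ordinal jk) => //; apply: val_inj.
  by case=> j0 _ ->; rewrite /= ltn_ord.
rewrite card_imset ?card_ord //; move=> a b /(congr1 val) /= e; exact: val_inj.
Qed.

Lemma down_prefix (S : {set 'I_C}) :
  (forall j j0 : 'I_C, j \in S -> j0 < j -> j0 \in S) -> forall j, (j \in S) = (j < #|S|).
Proof.
move=> dc j; apply/idP/idP => h.
  have sub : [set j0 : 'I_C | j0 < j.+1] \subset S.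
    apply/subsetP => j0; rewrite inE ltnS leq_eqVlt => /orP [/eqP e|lt].
      by rewrite (_ : j0 = j) //; apply: val_inj.
    exact: dc h lt.
  by have := subset_leq_card sub; rewrite card_prefix.
apply: contraLR h => nj; rewrite -leqNgt.
have sub : S \subset [set j0 : 'I_C | j0 < j].
  apply/subsetP => j0 j0S; rewrite inE ltnNge; apply/negP => jj0.
  move: jj0; rewrite leq_eqVlt => /orP [/eqP e|lt].
    by move: nj; rewrite (_ : j = j0) ?j0S //; apply: val_inj.
  by move: nj; rewrite (dc j0 j j0S lt).
by have := subset_leq_card sub; rewrite card_prefix // ltnW.
Qed.


Definition rowS m (T : tab) (i : 'I_N) : {set 'I_C} :=
  [set j : 'I_C | [exists x in T (i, j), x < m]].

Definition mu m (mN : m <= N) (T : tab) : {ffun 'I_m -> 'I_C.+1} :=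
  [ffun i => inord #|rowS m T (widen_ord mN i)|].

Definition shp m (Y : {ffun 'I_m -> 'I_C.+1}) : seq nat := [seq (Y i : nat) | i <- enum 'I_m].

Lemma nth_shp m (Y : {ffun 'I_m -> 'I_C.+1}) (i : 'I_m) : nth 0 (shp Y) i = Y i.
Proof. by rewrite /shp (nth_map i) ?nth_ord_enum // size_enum_ord. Qed.

Lemma nth_shp_ge m (Y : {ffun 'I_m -> 'I_C.+1}) i : m <= i -> nth 0 (shp Y) i = 0.
Proof. by move=> h; rewrite nth_default // size_map size_enum_ord. Qed.

Definition Qf lam m (i : 'I_m) (y : 'I_C.+1) : bool := nth 0 lam i.+1 <= y <= nth 0 lam i.

Lemma in_diagP lam i j : in_diag lam i j = (j < nth 0 lam i).
Proof. by []. Qed.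

Lemma nonempty_diag lam m T (c : 'I_N * 'I_C) (x : 'I_N) : valid lam m T -> x \in T c -> in_diag lam c.1 c.2.
Proof. by move=> vT xin; rewrite -(vdiag vT c); apply/nonemptyP; exists x. Qed.

Lemma diag_nonempty lam m T (c : 'I_N * 'I_C) : valid lam m T -> in_diag lam c.1 c.2 -> exists x, x \in T c.
Proof. by move=> vT; rewrite -(vdiag vT c) => /nonemptyP. Qed.

Lemma rowS_prefix lam m m' T (i : 'I_N) : valid lam m' T -> part lam ->
  forall j, (j \in rowS m T i) = (j < #|rowS m T i|).
Proof.
move=> vT pl; apply: down_prefix => j j0; rewrite !inE => /existsP [x /andP [xin xm]] lt.
have dj := nonempty_diag vT xin.
have dj0 : in_diag lam (i, j0).1 (i, j0).2 by move: dj; rewrite !in_diagP /=; lia.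
have [z zin] := diag_nonempty vT dj0.
apply/existsP; exists z; rewrite zin /=.
have := rowchain vT pl lt zin xin; lia.
Qed.

Lemma rowS_sub_diag lam m m' T (i : 'I_N) : valid lam m' T ->
  rowS m T i \subset [set j : 'I_C | j < nth 0 lam i].
Proof.
move=> vT; apply/subsetP => j; rewrite !inE => /existsP [x /andP [xin _]].
exact: (nonempty_diag vT xin).
Qed.

Section Rec.
Variables (lam : seq nat) (m : nat) (mN : m < N).
Hypotheses (pl : part lam) (l0C : nth 0 lam 0 <= C) (lz : forall i, m < i -> nth 0 lam i = 0).

Let mNw := ltnW mN.

Lemma lamC i : nth 0 lam i <= C.
Proof. by apply: leq_trans l0C; apply: part_mono. Qed.

Lemma mu_family T : valid lam m.+1 T -> mu mNw T \in family (@Qf lam m).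
Proof.
move=> vT; apply/familyP => i; rewrite /Qf ffunE.
set r := widen_ord mNw i.
have cC : #|rowS m T r| <= C.
  by apply: leq_trans (subset_leq_card (@rowS_sub_diag lam m m.+1 T r vT)) _; rewrite card_prefix ?lamC.
rewrite unfold_in /= inordK ?ltnS //; apply/andP; split; last first.
  by apply: leq_trans (subset_leq_card (@rowS_sub_diag lam m m.+1 T r vT)) _; rewrite card_prefix ?lamC.
have i1N : i.+1 < N by apply: leq_trans mN; rewrite ltnS.
pose r1 := Ordinal i1N.
have sub : [set j : 'I_C | j < nth 0 lam i.+1] \subset rowS m T r.
  apply/subsetP => j; rewrite !inE => jl.
  have [z zin] := diag_nonempty vT (c := (r1, j)) jl.
  have dj : in_diag lam (r, j).1 (r, j).2 by rewrite in_diagP /=; have := pl i; lia.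
  have [x xin] := diag_nonempty vT dj.
  apply/existsP; exists x; rewrite xin /=.
  have := vcol vT (i := r1) (i' := r) (j := j) erefl jl xin zin.
  have := vlt vT zin; lia.
by have := subset_leq_card sub; rewrite card_prefix ?lamC.
Qed.

Section Fiber.
Variable Y : {ffun 'I_m -> 'I_C.+1}.
Hypothesis HY : Y \in family (@Qf lam m).
Let mu0 := shp Y.

Lemma ilv i : nth 0 lam i.+1 <= nth 0 mu0 i <= nth 0 lam i.
Proof.
case: (ltnP i m) => im.
  move/familyP: HY => /(_ (Ordinal im)); rewrite /Qf /mu0 (nth_shp Y (Ordinal im)) //.
by rewrite /mu0 nth_shp_ge // lz.
Qed.

Lemma part_mu : part mu0.
Proof. move=> i; have := ilv i; have := ilv i.+1; lia. Qed.

Let ordm : 'I_N := Ordinal mN.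

Definition Rset : {set 'I_N} := [set i : 'I_N | nth 0 lam i.+1 < nth 0 mu0 i].
Definition Ecands : {set {set 'I_N}} := if sv then powerset Rset else [set set0].

Definition cond (E : {set 'I_N}) (c : 'I_N * 'I_C) : bool :=
  in_diag lam c.1 c.2 && ((nth 0 mu0 c.1 <= c.2) || ((c.1 \in E) && (c.2.+1 == nth 0 mu0 c.1))).

Definition psi (p : tab * {set 'I_N}) : tab :=
  [ffun c => p.1 c :|: (if cond p.2 c then [set ordm] else set0)].

Definition Dom := setX (SVTg mu0 m) Ecands.

Lemma mem_psi p c x : (x \in psi p c) = (x \in p.1 c) || (cond p.2 c && (x == ordm)).
Proof. by rewrite ffunE inE; case: (cond _ _); rewrite ?inE ?andbT ?andbF ?orbF. Qed.

Lemma Dom_E p : p \in Dom -> p.2 \subset Rset.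
Proof.
case: p => T E; rewrite inE /= => /andP [_]; rewrite /Ecands.
by case: sv; rewrite inE // => /eqP ->; apply: sub0set.
Qed.

Lemma Dom_sing p : ~~ sv -> p \in Dom -> p.2 = set0.
Proof.
case: p => T E nsv; rewrite inE /= => /andP [_]; rewrite /Ecands (negbTE nsv).
by rewrite inE => /eqP.
Qed.

Lemma Dom_valid p : p \in Dom -> valid mu0 m p.1.
Proof. by case: p => T E; rewrite inE /= => /andP [ ]; rewrite inE => /validP. Qed.


Lemma psi_le p c x : p \in Dom -> x \in psi p c -> x <= m.
Proof.
move=> pD; rewrite mem_psi => /orP [xin|/andP [_ /eqP ->]] //.
by apply: ltnW; apply: (vlt (Dom_valid pD) xin).
Qed.

Lemma mu_le_lam i : nth 0 mu0 i <= nth 0 lam i.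
Proof. by have := ilv i; lia. Qed.

Lemma psi_valid p : p \in Dom -> valid lam m.+1 (psi p).
Proof.
move=> pD; have vT := Dom_valid pD; have ER := Dom_E pD.
case: p pD vT ER => T E pD /= vT ER.
have ER' : forall i, i \in E -> nth 0 lam i.+1 < nth 0 mu0 i.
  by move=> i iE; have := subsetP ER i iE; rewrite inE.
split.
- move=> [i j] /=.
  case dm: (in_diag mu0 i j).
    have [x xin] := diag_nonempty vT (c := (i, j)) dm.
    have -> : in_diag lam i j by move: dm; rewrite !in_diagP; have := mu_le_lam i; lia.
    by apply/nonemptyP; exists x; rewrite mem_psi xin.
  have T0 : T (i, j) = set0 by apply/eqP; rewrite -[_ == _]negbK (vdiag vT (i, j)) /= dm.
  rewrite ffunE T0 set0U /cond /=.
  have -> : nth 0 mu0 i <= j by move: dm; rewrite in_diagP; lia.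
  rewrite orTb andbT; case: (in_diag _ _ _); last by rewrite eqxx.
  by apply/nonemptyP; exists ordm; rewrite inE.
- move=> i j j' x y e dj xin yin.
  move: yin; rewrite mem_psi => /orP [yin|/andP [_ /eqP ->]]; last first.
    exact: (psi_le pD xin).
  have dmj := nonempty_diag vT yin; rewrite /= in_diagP in dmj.
  move: xin; rewrite mem_psi => /orP [xin|]; first exact: (vrow vT e _ xin yin).
  rewrite /cond /= => /andP [/andP [_ h] _]; exfalso.
  move: h => /orP [h|/andP [_ /eqP h]]; lia.
- move=> i i' j x y e dj xin yin.
  have l1 := ilv i'; rewrite e in l1.
  have l2 := mu_le_lam i.
  move: yin; rewrite mem_psi => /orP [yin|/andP [_ /eqP ->]]; last first.
    move: xin; rewrite mem_psi => /orP [xin|]; first exact: (vlt vT xin).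
    rewrite /cond /= => /andP [/andP [_ h] _]; exfalso; rewrite in_diagP in dj.
    move: h => /orP [h|/andP [iE /eqP h]]; first lia.
    have := ER' _ iE; rewrite e; lia.
  have dmj := nonempty_diag vT yin; rewrite /= in_diagP in dmj.
  move: xin; rewrite mem_psi => /orP [xin|]; first exact: (vcol vT e _ xin yin).
  rewrite /cond /= => /andP [/andP [_ h] _]; exfalso; rewrite in_diagP in dj.
  move: h => /orP [h|/andP [iE /eqP h]]; first lia.
  have := ER' _ iE; rewrite e; lia.
- by move=> c x xin; have := psi_le pD xin; rewrite ltnS.
- move=> nsv c; have E0 := Dom_sing nsv pD; rewrite /= in E0.
  rewrite ffunE E0 /cond in_set0 ?andbF ?andFb ?orbF.
  case: c => i j /=.
  case h: (_ && _); last by rewrite setU0; apply: (vsing vT nsv).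
  have T0 : T (i, j) = set0.
    apply/eqP; rewrite -[_ == _]negbK (vdiag vT (i, j)) /= in_diagP.
    by move: h => /andP [_]; lia.
  by rewrite T0 set0U cards1.
Qed.

Lemma rowS_psi p (i : 'I_N) : p \in Dom -> rowS m (psi p) i = [set j : 'I_C | j < nth 0 mu0 i].
Proof.
move=> pD; have vT := Dom_valid pD.
apply/setP => j; rewrite !inE; apply/existsP/idP.
  case=> x /andP [xin xm]; move: xin; rewrite mem_psi => /orP [xin|/andP [_ /eqP e]].
    exact: (nonempty_diag vT xin).
  by move: xm; rewrite e /= ltnn.
move=> dj; have [x xin] := diag_nonempty vT (c := (i, j)) dj.
by exists x; rewrite mem_psi xin /= (vlt vT xin).
Qed.

Lemma psi_mu p : p \in Dom -> mu mNw (psi p) = Y.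
Proof.
move=> pD; apply/ffunP => i; rewrite ffunE rowS_psi // card_prefix; last first.
  by apply: leq_trans (mu_le_lam _) (lamC _).
by rewrite /mu0 (nth_shp Y i) inord_val.
Qed.

Lemma psi_inj : {in Dom &, injective psi}.
Proof.
move=> [T1 E1] [T2 E2] p1D p2D e.
have vT1 := Dom_valid p1D; have vT2 := Dom_valid p2D.
have hT : forall p, p \in Dom -> forall c x, (x \in p.1 c) = (x \in psi p c) && (x != ordm).
  move=> p pD c x; rewrite mem_psi.
  case xin: (x \in p.1 c) => /=.
    by apply/esym/eqP => exm; have := vlt (Dom_valid pD) xin; rewrite exm /= ltnn.
  by case: (x == ordm); rewrite ?andbF.
have eT : T1 = T2.
  apply/ffunP => c; apply/setP => x.
  by rewrite (hT _ p1D) (hT _ p2D) /= e.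
have eE : E1 = E2.
  apply/setP => i.
  case iR: (i \in Rset); last first.
    have h1 : i \notin E1 by apply: contraFN iR; apply: (subsetP (Dom_E p1D)).
    have h2 : i \notin E2 by apply: contraFN iR; apply: (subsetP (Dom_E p2D)).
    by rewrite (negbTE h1) (negbTE h2).
  have iR' : nth 0 lam i.+1 < nth 0 mu0 i by move: iR; rewrite inE.
  have jC : (nth 0 mu0 i).-1 < C.
    have := mu_le_lam i; have := lamC i; lia.
  pose j := Ordinal jC.
  have key : forall p, p \in Dom -> (ordm \in psi p (i, j)) = (i \in p.2).
    move=> p pD; rewrite mem_psi eqxx andbT.
    have -> : (ordm \in p.1 (i, j)) = false.
      by apply/negbTE/negP => h; have := vlt (Dom_valid pD) h; rewrite /= ltnn.
    rewrite /cond /= in_diagP.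
    have -> : j < nth 0 lam i by rewrite /=; have := mu_le_lam i; lia.
    have -> : (nth 0 mu0 i <= j) = false by rewrite /=; apply/negbTE; lia.
    have -> : (j.+1 == nth 0 mu0 i) by rewrite /=; apply/eqP; lia.
    by rewrite andbT.
  by rewrite -(key _ p1D) -(key _ p2D) e.
by rewrite eT eE.
Qed.

Lemma psi_surj T : valid lam m.+1 T -> mu mNw T = Y -> exists2 p, p \in Dom & T = psi p.
Proof.
move=> vT muT.
have rowSE : forall (r : 'I_N) (j : 'I_C), (j \in rowS m T r) = (j < nth 0 mu0 r).
  move=> r j; case: (ltnP r m) => rm.
    have : mu mNw T (Ordinal rm) = Y (Ordinal rm) by rewrite muT.
    rewrite ffunE /=.
    have -> : widen_ord mNw (Ordinal rm) = r by apply: val_inj.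
    move=> h; rewrite /mu0 (nth_shp Y (Ordinal rm)) /= -h.
    have cC : #|rowS m T r| <= C.
      apply: leq_trans (subset_leq_card (@rowS_sub_diag lam m m.+1 T r vT)) _.
      by rewrite card_prefix ?lamC.
    by rewrite inordK ?ltnS // (@rowS_prefix lam m m.+1 T r vT pl).
  rewrite /mu0 nth_shp_ge //= inE; apply/negbTE/existsP => -[x /andP [xin xm]].
  have := rowbound vT pl xin; lia.
have Tle : forall c x, x \in T c -> x <= m by move=> c x xin; have := vlt vT xin; lia.
pose T' : tab := [ffun c => T c :\ ordm].
pose E : {set 'I_N} := [set i : 'I_N | [exists j : 'I_C, (j.+1 == nth 0 mu0 i) && (ordm \in T (i, j))]].
have key : forall c, (ordm \in T c) = cond E c.
  move=> [i j]; rewrite /cond /=; apply/idP/idP.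
    move=> min; have dj := nonempty_diag vT min; rewrite dj /=.
    case: (leqP (nth 0 mu0 i) j) => //= jm.
    have e : j.+1 = nth 0 mu0 i.
      case: (ltnP j.+1 (nth 0 mu0 i)) => h; last lia.
      have j1C : j.+1 < C by have := mu_le_lam i; have := lamC i; lia.
      pose j1 := Ordinal j1C.
      have : j1 \in rowS m T i by rewrite rowSE.
      rewrite inE => /existsP [z /andP [zin zm]].
      have := vrow vT (j := j1) (j' := j) erefl _ min zin.
      rewrite in_diagP /= => /(_ (leq_trans h (mu_le_lam i))); lia.
    rewrite e eqxx andbT inE; apply/existsP; exists j; rewrite min e eqxx //.
  case/andP => dj /orP [h|/andP [iE /eqP e]].
    have [x xin] := diag_nonempty vT (c := (i, j)) dj.
    have nx : j \notin rowS m T i by rewrite rowSE -leqNgt.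
    have xm : x = ordm.
      apply: val_inj => /=; have := Tle _ _ xin.
      case: (ltnP x m) => [xm|xm] h2; last by apply/eqP; rewrite eqn_leq h2 xm.
      by move: nx; rewrite inE; case/negP; apply/existsP; exists x; rewrite xin.
    by rewrite -xm.
  move: iE; rewrite inE => /existsP [j0 /andP [/eqP e0 j0in]].
  by rewrite (_ : j = j0) //; apply: val_inj; move: e e0 => /= <-; case.
have eT : T = psi (T', E).
  apply/ffunP => c; apply/setP => x; rewrite mem_psi /= ffunE !inE -key.
  case: (eqVneq x ordm) => [->|xm]; first by rewrite andbT.
  by rewrite andbF orbF.
exists (T', E) => //.
have vT' : valid mu0 m T'.
  split.
  - move=> [i j] /=; rewrite in_diagP -rowSE inE ffunE; apply/idP/idP.
      move/nonemptyP => [x]; rewrite !inE => /andP [xm xin].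
      apply/existsP; exists x; rewrite xin /=.
      have := Tle _ _ xin; move: xm; rewrite -val_eqE /=; lia.
    move/existsP => [x /andP [xin xm]]; apply/nonemptyP; exists x; rewrite !inE xin andbT.
    by rewrite -val_eqE /=; lia.
  - move=> i j j' x y e dj; rewrite !ffunE !inE => /andP [_ xin] /andP [_ yin].
    apply: (vrow vT e _ xin yin); move: dj; rewrite !in_diagP; have := mu_le_lam i; lia.
  - move=> i i' j x y e dj; rewrite !ffunE !inE => /andP [_ xin] /andP [_ yin].
    apply: (vcol vT e _ xin yin); move: dj; rewrite !in_diagP; have := mu_le_lam i; lia.
  - move=> c x; rewrite ffunE !inE => /andP [xm xin].
    have := Tle _ _ xin; move: xm; rewrite -val_eqE /=; lia.
  - move=> nsv c; rewrite ffunE; apply: leq_trans (vsing vT nsv c).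
    by apply: subset_leq_card; apply: subsetDl.
rewrite inE /=; apply/andP; split; first by rewrite inE; apply/validP.
rewrite /Ecands; case svE: sv.
  rewrite inE; apply/subsetP => i; rewrite !inE => /existsP [j /andP [/eqP e min]].
  rewrite ltnNge; apply/negP => h.
  case: (ltnP i.+1 N) => iN; last first.
    by move: h; rewrite lz -?e //; apply: leq_trans mN _.
  pose i1 := Ordinal iN.
  have dj : in_diag lam i1 j by rewrite in_diagP /=; lia.
  have [z zin] := diag_nonempty vT (c := (i1, j)) dj.
  have := vcol vT (i := i1) (i' := i) (j := j) erefl dj min zin.
  have := Tle _ _ zin; rewrite /=; lia.
rewrite inE; apply/eqP/setP => i; rewrite !inE; apply/negbTE/negP => /existsP [j /andP [/eqP e min]].
have : j \in rowS m T i by rewrite rowSE -e.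
rewrite inE => /existsP [x /andP [xin xm]].
have := vsing vT (negbT svE) (i, j).
have : [set x; ordm] \subset T (i, j) by apply/subsetP => z; rewrite !inE => /orP [] /eqP ->.
move=> /subset_leq_card; rewrite cards2.
have -> : (x != ordm) by rewrite -val_eqE /=; lia.
move=> h1 h2; have := leq_trans h1 h2; by [].
Qed.

Lemma fiber_card :
  #|[set T in SVTg lam m.+1 | mu mNw T == Y]| = (if sv then 2 ^ #|Rset| else 1) * #|SVTg mu0 m|.
Proof.
have -> : [set T in SVTg lam m.+1 | mu mNw T == Y] = psi @: Dom.
  apply/setP => T; rewrite !inE; apply/andP/imsetP.
    case=> /validP vT /eqP muT; have [p pD eT] := psi_surj vT muT.
    by exists p.
  case=> p pD ->; split; first by apply/validP; apply: psi_valid.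
  by rewrite psi_mu.
rewrite card_in_imset; last exact: psi_inj.
rewrite /Dom cardsX /Ecands mulnC; case: sv.
  by rewrite card_powerset.
by rewrite cards1.
Qed.

End Fiber.
Lemma comb_rec : #|SVTg lam m.+1| =
  \sum_(Y in family (@Qf lam m)) (if sv then 2 ^ #|Rset Y| else 1) * #|SVTg (shp Y) m|.
Proof.
rewrite -sum1_card (partition_big (fun T => mu mNw T) (mem (family (@Qf lam m)))) /=; last first.
  by move=> T; rewrite inE => /validP vT; apply: mu_family.
apply: eq_bigr => Y HY; rewrite -(fiber_card HY) -sum1_card.
by apply: eq_bigl => T; rewrite !inE.
Qed.

End Rec.
End Comb.

Local Open Scope ring_scope.

Definition G (sv : bool) (i x j : nat) : rat :=
  \sum_(k < i.+1) (sv%:R)^+k * 'C(i,k)%:R * 'C(x+k, j)%:R.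

Lemma G0 sv i x : G sv i x 0 = (1 + sv%:R)^+i.
Proof.
rewrite addrC exprD1n /G; apply: eq_bigr => k _.
by rewrite bin0 mulr1 mulr_natr.
Qed.

Lemma Gpascal sv i x j : G sv i x j + sv%:R * G sv i x.+1 j = G sv i.+1 x j.
Proof.
rewrite /G mulr_sumr big_ord_recl [in RHS]big_ord_recl /= !bin0 !addn0.
rewrite -addrA; congr (_ + _).
rewrite [X in X + _ = _](_ : _ = \sum_(i0 < i.+1)
   sv%:R ^+ bump 0 i0 * 'C(i, bump 0 i0)%:R * 'C(x + bump 0 i0, j)%:R); last first.
  by rewrite big_ord_recr /= /bump /= add1n bin_small // mulr0 mul0r addr0.

rewrite -big_split /=; apply: eq_bigr => k _.
rewrite /bump /= !add1n binS natrD addnS -addSn.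
rewrite exprS; ring.
Qed.

Lemma Gtel sv i z j : G sv i z.+1 j.+1 - G sv i z j.+1 = G sv i z j.
Proof.
rewrite /G -sumrB; apply: eq_bigr => k _.
by rewrite addSn binS natrD; ring.
Qed.

Lemma Gsum sv i a b c j : (a <= b)%N ->
  \sum_(a <= y < b) G sv i (y + c) j = G sv i (b + c) j.+1 - G sv i (a + c) j.+1.
Proof.
move=> ab; rewrite (telescope_sumr_eq (fun y => G sv i (y + c) j.+1)) //.
by move=> k _; rewrite addSn Gtel.
Qed.

Lemma rowsum (sv : bool) (i a b c j : nat) : (a <= b)%N ->
  \sum_(a <= y < b.+1) (1 + sv%:R * (a < y)%N%:R) * G sv i (y + c) j =
  (1 + sv%:R) * G sv i (b + c).+1 j.+1 - G sv i.+1 (a + c) j.+1.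
Proof.
move=> ab.
under eq_bigr do rewrite mulrDl mul1r.
rewrite big_split /= Gsum ?(leq_trans ab) //.
rewrite big_ltn ?ltnS // ltnn mulr0 mul0r add0r.
rewrite (eq_big_nat _ _ (F2 := fun y => sv%:R * G sv i (y + c) j)); last first.
  by move=> y /andP[ay _]; rewrite ay mulr1.
rewrite -mulr_sumr Gsum // -Gpascal addSn; ring.
Qed.


Lemma det_sum_rows m (J : finType) (Q : 'I_m -> pred J) (g : 'I_m -> J -> 'I_m -> rat) :
  \det (\matrix_(i, j) \sum_(y | Q i y) g i y j) =
  \sum_(Y in family Q) \det (\matrix_(i, j) g i (Y i) j).
Proof.
rewrite /determinant.
under eq_bigr => s _.
  under eq_bigr do rewrite mxE.
  rewrite bigA_distr_big_dep mulr_sumr.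
over.
rewrite exchange_big /=; apply: eq_bigr => Y _; apply: eq_bigr => s _.
by congr (_ * _); apply: eq_bigr => i _; rewrite mxE.
Qed.

Lemma det_scale_rows m (a : 'I_m -> rat) (B : 'M[rat]_m) :
  \det (\matrix_(i, j) (a i * B i j)) = (\prod_i a i) * \det B.
Proof.
rewrite /determinant mulr_sumr; apply: eq_bigr => s _.
under eq_bigr do rewrite mxE.
by rewrite big_split /= mulrCA.
Qed.

Lemma det_step m (q : rat) (F : nat -> nat -> rat) :
  (forall i, F i 0%N = q ^+ i) ->
  \det (\matrix_(i < m, j < m) (q * F i j.+1 - F i.+1 j.+1)) =
  (-1) ^+ m * \det (\matrix_(i < m.+1, j < m.+1) F i j).
Proof.
move=> F0.
set M := \matrix_(i < m.+1, j < m.+1) F i j.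
pose A : 'M[rat]_m.+1 := \matrix_(i, k) (if i == k then (if i == ord0 then 1 else -1)
   else if (k.+1 == i)%N then q else 0).
have dA : \det A = (-1) ^+ m.
  rewrite det_trig; last first.
    apply/forallP => i; apply/forallP => k; apply/implyP => ik.
    rewrite mxE; have -> : (i == k) = false by apply/negbTE; rewrite -val_eqE /= neq_ltn ik.
    rewrite ifF //; apply/negbTE; apply/eqP; lia.
  rewrite big_ord_recl mxE eqxx mul1r.
  rewrite (eq_bigr (fun _ => -1)); last by move=> i _; rewrite mxE eqxx.
  by rewrite prodr_const card_ord.
have AM0 : (A *m M) ord0 =1 M ord0.
  move=> j; rewrite mxE (bigD1 ord0) //= mxE eqxx mul1r big1 ?addr0 //.
  move=> k /negbTE kn0; rewrite mxE eq_sym kn0 /=.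
  by case: (k : nat) => [|k'] //=; rewrite mul0r.
have AMS : forall (i : 'I_m) (j : 'I_m.+1), (A *m M) (lift ord0 i) j = q * F i j - F i.+1 j.
  move=> i j; rewrite mxE (bigD1 (lift ord0 i)) //= (bigD1 (widen_ord (leqnSn m) i)) /=; last first.
    by rewrite -val_eqE /= /bump /= add1n neq_ltn ltnSn.
  rewrite !mxE eqxx /=.
  have -> : (lift ord0 i == widen_ord (leqnSn m) i) = false.
    by apply/negbTE; rewrite -val_eqE /= /bump /= add1n neq_ltn ltnSn orbT.
  rewrite /bump /= add1n eqxx big1 ?addr0; first by ring.
  move=> k /andP[k1 k2]; rewrite mxE.
  rewrite ifF; last by apply/negbTE; rewrite eq_sym.
  rewrite ifF ?mul0r //; apply/negbTE; apply: contra k2 => /eqP e.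
  by rewrite -val_eqE /=; move: e; rewrite /= /bump /= add1n => -[->].
have E : \det (A *m M) = \det (row' ord0 (col' ord0 (A *m M))).
  rewrite (expand_det_col _ ord0) (bigD1 ord0) //= big1 ?addr0; last first.
    move=> i /negbTE in0.
    have [i' ->] : exists i' : 'I_m, i = lift ord0 i'.
      case: i in0 => [[|i'] Hi] // _; exists (Ordinal (Hi : (i' < m)%N)).
      by apply: val_inj; rewrite /= /bump /= add1n.
    by rewrite AMS /= !F0 -exprS subrr mul0r.
  by rewrite AM0 /M mxE F0 expr0 mul1r /cofactor addn0 expr0 mul1r.
rewrite -dA -det_mulmx E.
congr (\det _); apply/matrixP => i j; rewrite !mxE; have := AMS i (lift ord0 j); rewrite mxE => ->; by rewrite lift0.
Qed.


Lemma ffR (y j : nat) : \prod_(t < j) ((y%:R : rat) - t%:R) = (y ^_ j)%:R.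
Proof.
elim: j => [|j IH]; first by rewrite big_ord0 ffactn0.
rewrite big_ord_recr /= IH ffactnSr natrM.
case: (leqP j y) => jy; first by rewrite natrB.
by rewrite ffact_small // !mul0r.
Qed.

Lemma binR (y j : nat) : 'C(y, j)%:R = \prod_(t < j) ((y%:R : rat) - t%:R) / (j`!)%:R.
Proof.
rewrite ffR -bin_ffact natrM mulfK //.
by rewrite pnatr_eq0 -lt0n fact_gt0.
Qed.

Definition bpoly (j : nat) : {poly rat} :=
  \prod_(t < j) ('X - (t%:R)%:P) * ((j`!)%:R^-1)%:P.

Lemma bpolyE j y : (bpoly j).[y%:R] = 'C(y, j)%:R.
Proof.
rewrite binR /bpoly hornerM hornerC horner_prod; congr (_ * _).
by apply: eq_bigr => t _; rewrite hornerXsubC.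
Qed.

Lemma size_bpoly j : (size (bpoly j) <= j.+1)%N.
Proof.
rewrite /bpoly; apply: (leq_trans (size_polyMleq _ _)).
have h : (size ((\prod_(t < j) ('X - (t%:R)%:P)) : {poly rat})%R <= j.+1)%N.
  elim: j => [|j IH]; first by rewrite big_ord0 size_poly1.
  rewrite big_ord_recr /=; apply: (leq_trans (size_polyMleq _ _)).
  by rewrite size_XsubC addn2 /=.
apply: (leq_trans _ h); have := size_polyC_leq1 ((j`!)%:R^-1 : rat).
set a := size _; set b := size _; lia.
Qed.

Lemma det_binom m : exists c : rat, forall y : 'I_m -> nat,
  \det (\matrix_(i, j) ('C(y i, j))%:R) =
  c * \prod_(i < m) \prod_(j < m | (i < j)%N) ((y j)%:R - (y i)%:R).
Proof.
pose U : 'M[rat]_m := \matrix_(e, j) (bpoly j)`_e.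
exists (\det U) => y.
pose a : 'rV[rat]_m := \row_i (y i)%:R.
have -> : \matrix_(i, j) ('C(y i, j))%:R = (Vandermonde m a)^T *m U.
  apply/matrixP => i j; rewrite !mxE -bpolyE.
  rewrite (horner_coef_wide _ (leq_trans (size_bpoly j) (ltn_ord j))).
  by apply: eq_bigr => e _; rewrite !mxE mulrC.
rewrite det_mulmx det_tr det_Vandermonde mulrC; congr (_ * _).
by apply: eq_bigr => i _; apply: eq_bigr => j _; rewrite !mxE.
Qed.

Lemma pochE (i k : nat) : poch (- (i%:R)) k / poch 1 k * (-1) ^+ k = 'C(i, k)%:R.
Proof.
rewrite binR /poch.
have -> : \prod_(t < k) (1 + t%:R) = (k`!)%:R :> rat.
  elim: k => [|k IH]; first by rewrite big_ord0.
  by rewrite big_ord_recr /= IH factS natrM -natr1 addrC mulrC.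
rewrite mulrAC; congr (_ / _).
have -> : (-1) ^+ k = \prod_(t < k) (-1 : rat) by rewrite prodr_const card_ord.
rewrite -big_split /=.
by apply: eq_bigr => t _; ring.
Qed.


Local Close Scope ring_scope.
Local Open Scope ring_scope.

Lemma sum_ord_range (C a b : nat) (F : nat -> rat) : (a <= b)%N -> (b <= C)%N ->
  \sum_(y < C.+1 | (a <= y <= b)%N) F y = \sum_(a <= y < b.+1) F y.
Proof.
move=> ab bC.
rewrite -(big_mkord (fun y => (a <= y <= b)%N) F).
rewrite [RHS](big_nat_widenl _ 0) // [RHS](big_nat_widen _ _ C.+1) //.

Qed.

Lemma weightE N C (lam : seq nat) m (mN : (m < N)%N) (sv : bool) (Y : {ffun 'I_m -> 'I_C.+1}) :
  ((if sv then 2 ^ #|Rset N lam Y| else 1)%N%:R : rat) =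
  \prod_(i < m) (1 + sv%:R * (nth 0 lam i.+1 < Y i)%N%:R).
Proof.
case: sv => /=; last by rewrite big1 // => i _; rewrite mul0r addr0.
set S := [set i : 'I_m | (nth 0 lam i.+1 < Y i)%N].
have -> : #|Rset N lam Y| = #|S|.
  have -> : Rset N lam Y = widen_ord (ltnW mN) @: S.
    apply/setP => i; rewrite inE; apply/idP/imsetP.
      case: (ltnP i m) => im h.
        exists (Ordinal im); last by apply: val_inj.
        by rewrite inE; move: h; rewrite (nth_shp Y (Ordinal im)).
      by move: h; rewrite nth_shp_ge.
    case=> i0; rewrite inE => h ->; rewrite /= (nth_shp Y i0) //.
  by rewrite card_imset //; move=> a b /(congr1 val) /= e; apply: val_inj.
rewrite natrX -prodr_const big_mkcond /=.
by apply: eq_bigr => i _; rewrite inE mul1r; case: (_ < _)%N.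
Qed.

Lemma det_scale_rowsF m (a : 'I_m -> rat) (b : 'I_m -> 'I_m -> rat) :
  \det (\matrix_(i, j) (a i * b i j)) = (\prod_i a i) * \det (\matrix_(i, j) b i j).
Proof.
rewrite -det_scale_rows; congr (\det _); apply/matrixP => i j; by rewrite !mxE.
Qed.

Fixpoint cst (m : nat) : rat := if m is m'.+1 then (-1) ^+ m' * cst m' else 1.

Lemma count_base N C sv lam : (forall i, nth 0 lam i = 0%N) -> #|SVTg N C sv lam 0| = 1%N.
Proof.
move=> l0.
have -> : SVTg N C sv lam 0 = [set [ffun => set0]].
  apply/setP => T; rewrite !inE; apply/validP/eqP.
    move=> vT; apply/ffunP => c; apply/setP => x; rewrite ffunE inE.
    by apply/negbTE/negP => xin; have := vlt vT xin.
  move=> ->; split.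
  - by move=> c; rewrite ffunE eqxx in_diagP l0.
  - by move=> i j j' x y _ _; rewrite ffunE inE.
  - by move=> i i' j x y _ _; rewrite ffunE inE.
  - by move=> c x; rewrite ffunE inE.
  - by move=> _ c; rewrite ffunE cards0.
by rewrite cards1.
Qed.

Theorem count_svt (N C : nat) (sv : bool) (m : nat) : (m <= N)%N -> forall lam, part lam ->
  (nth 0 lam 0 <= C)%N -> (forall i, (m <= i)%N -> nth 0 lam i = 0%N) ->
  (#|SVTg N C sv lam m|)%:R =
    cst m * \det (\matrix_(i < m, j < m) G sv i (nth 0 lam i + (m - i.+1))%N j).
Proof.
elim: m => [|m IH] mN lam pl l0C lz.
  by rewrite count_base ?det_mx00 ?mulr1 // => i; apply: lz.
have lz' : forall i, (m < i)%N -> nth 0 lam i = 0%N by move=> i; apply: lz.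
rewrite (comb_rec sv mN pl l0C lz') natr_sum.
transitivity (cst m * \sum_(Y in family (@Qf C lam m))
   \det (\matrix_(i < m, j < m) ((1 + sv%:R * (nth 0 lam i.+1 < Y i)%N%:R) *
          G sv i (Y i + (m - i.+1))%N j))).
  rewrite mulr_sumr; apply: eq_bigr => Y HY.
  rewrite natrM (weightE _ mN) (IH (ltnW mN)); last first.
  - by move=> i; apply: nth_shp_ge.
  - by have := ilv lz' HY 0; rewrite /= => /andP [_ h]; apply: leq_trans h l0C.
  - exact: (part_mu mN l0C lz' HY).
  rewrite det_scale_rowsF mulrCA; congr (_ * (_ * \det _)).
  by apply/matrixP => i j; rewrite !mxE (nth_shp Y i).
rewrite -(det_sum_rows (@Qf C lam m) (fun i (y : 'I_C.+1) (j : 'I_m) =>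
   (1 + sv%:R * (nth 0 lam i.+1 < y)%N%:R) * G sv i (y + (m - i.+1))%N j)).
set q : rat := 1 + sv%:R.
pose F i j := G sv i (nth 0 lam i + (m.+1 - i.+1))%N j.
transitivity (cst m * \det (\matrix_(i < m, j < m) (q * F i j.+1 - F i.+1 j.+1))).
  congr (_ * \det _); apply/matrixP => i j; rewrite !mxE.
  rewrite /Qf (@sum_ord_range C _ _ (fun y : nat => (1 + sv%:R * (nth 0 lam i.+1 < y)%N%:R) * G sv i (y + (m - i.+1))%N j)); last by apply: leq_trans (part_mono pl (leq0n _)) l0C.
    2: exact: pl.
  rewrite rowsum; last exact: pl.
  rewrite /F; congr (_ * G _ _ _ _ - G _ _ _ _).
    have := ltn_ord i; rewrite subSS; lia.
rewrite det_step; last by move=> i; rewrite /F G0.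
by rewrite /= mulrA [cst m * _]mulrC.
Qed.

Local Close Scope ring_scope.

Lemma part_of_sorted (lam : seq nat) : sorted geq lam -> part lam.
Proof.
elim: lam => [|a l IH] /= h i; first by rewrite !nth_nil.
case: i => [|i] /=.
  by case: l h IH => //= b l /andP [ab _] _.
exact: IH (path_sorted h) i.
Qed.

Section SM.
Variable n : nat.
Implicit Types (A : {set 'I_n}).

Lemma smax_ge A (x : 'I_n) : x \in A -> x <= smax n A.
Proof. by move=> xin; apply: (@leq_bigmax_cond _ (mem A) (fun x : 'I_n => x : nat)). Qed.

Lemma smin_le A (x : 'I_n) : x \in A -> smin n A <= x.
Proof.
move=> xin; rewrite /smin; have : x \in index_enum 'I_n by rewrite mem_index_enum.
elim: (index_enum _) => [|a r IH] //=; rewrite inE big_cons => /orP [/eqP e| h].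
  by rewrite -e xin; exact: geq_minl.
case: (a \in A); last exact: IH h.
exact: leq_trans (geq_minr _ _) (IH h).
Qed.

Lemma smin_geq A k : k <= n -> (forall y : 'I_n, y \in A -> k <= y) -> k <= smin n A.
Proof.
move=> kn h; rewrite /smin; apply: (big_ind (fun v => k <= v)) => //.
by move=> a b ka kb; rewrite leq_min ka kb.
Qed.

Lemma smax_mem A : A != set0 -> exists2 x : 'I_n, x \in A & smax n A = x.
Proof.
move=> ne; have : 0 < #|A| by rewrite card_gt0.
move=> /(@eq_bigmax_cond _ (mem A) (fun x : 'I_n => x : nat)) [x xin e].
by exists x.
Qed.
End SM.

Lemma svt_eq n (lam : seq nat) (T : {ffun 'I_n * 'I_(ncols lam) -> {set 'I_n}}) :
  part lam -> is_svt lam n T = validb (N:=n) (C:=ncols lam) true lam n T.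
Proof.
move=> pl; apply/idP/validP.
  move/forallP => h.
  have H : forall (i : 'I_n) (j : 'I_(ncols lam)), [&& (in_diag lam i j ==> (T (i, j) != set0)),
         (~~ in_diag lam i j ==> (T (i, j) == set0)),
         [forall j' : 'I_(ncols lam),
            ((j'.+1 == j :> nat) && in_diag lam i j) ==>
              (smax n (T (i, j')) <= smin n (T (i, j)))%N] &
         [forall i' : 'I_n,
            ((i'.+1 == i :> nat) && in_diag lam i j) ==>
              (smax n (T (i', j)) < smin n (T (i, j)))%N]].
    by move=> i j; move/forallP: (h i) => /(_ j).
  split.
  - move=> [i j] /=; case/and4P: (H i j) => a b _ _.
    case d: (in_diag lam i j); first by move: a; rewrite d.
    by move: b; rewrite d /= => /eqP ->; rewrite eqxx.
  - move=> i j j' x y e dj xin yin; case/and4P: (H i j) => _ _ /forallP /(_ j') c _.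
    move: c; rewrite e eqxx dj /= => c.
    exact: leq_trans (smax_ge xin) (leq_trans c (smin_le yin)).
  - move=> i i' j x y e dj xin yin; case/and4P: (H i j) => _ _ _ /forallP /(_ i') c.
    move: c; rewrite e eqxx dj /= => c.
    exact: leq_ltn_trans (smax_ge xin) (leq_trans c (smin_le yin)).
  - by move=> c x _; apply: ltn_ord.
  - by [].
move=> vT; apply/forallP => i; apply/forallP => j; apply/and4P; split.
- by apply/implyP => d; rewrite (vdiag vT (i, j)).
- apply/implyP => nd; have := vdiag vT (i, j); rewrite /= (negbTE nd).
  by move/negbFE.
- apply/forallP => j'; apply/implyP => /andP [/eqP e dj].
  apply/bigmax_leqP => x xin; apply: smin_geq; first exact: ltnW (ltn_ord x).
  by move=> y yin; apply: (vrow vT e dj xin yin).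
- apply/forallP => i'; apply/implyP => /andP [/eqP e dj].
  have dj' : in_diag lam (i', j).1 (i', j).2.
    by move: dj; rewrite !in_diagP /= -e; have := pl i'; lia.
  have [x0 x0in] := diag_nonempty vT dj'.
  have ne : T (i', j) != set0 by apply/set0Pn; exists x0.
  have [x xin ->] := smax_mem ne.
  apply: smin_geq; first exact: ltn_ord x.
  by move=> y yin; apply: (vcol vT e dj xin yin).
Qed.

Definition o2s n (o : option 'I_n) : {set 'I_n} := if o is Some x then [set x] else set0.

Definition Phi n C (T : {ffun 'I_n * 'I_C -> option 'I_n}) : tab n C := [ffun c => o2s (T c)].

Lemma mem_o2s n (o : option 'I_n) x : (x \in o2s o) = (o == Some x).
Proof. by case: o => [y|] /=; rewrite ?inE // eq_sym. Qed.

Lemma o2s_ne0 n (o : option 'I_n) : (o2s o != set0) = (o != None).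
Proof.
case: o => [y|] /=; last by rewrite eqxx.
by apply/set0Pn; exists y; rewrite inE.
Qed.

Lemma sst_eq n (lam : seq nat) (T : {ffun 'I_n * 'I_(ncols lam) -> option 'I_n}) :
  part lam -> is_sst lam n T = validb (N:=n) (C:=ncols lam) false lam n (Phi T).
Proof.
move=> pl; apply/idP/validP.
  move/forallP => h.
  have H : forall (i : 'I_n) (j : 'I_(ncols lam)), [&& (in_diag lam i j ==> (T (i, j) != None)),
         (~~ in_diag lam i j ==> (T (i, j) == None)),
         [forall j' : 'I_(ncols lam),
            ((j'.+1 == j :> nat) && in_diag lam i j) ==>
              (odflt 0%N (omap val (T (i, j'))) <= odflt 0%N (omap val (T (i, j))))%N] &
         [forall i' : 'I_n,
            ((i'.+1 == i :> nat) && in_diag lam i j) ==>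
              (odflt 0%N (omap val (T (i', j))) < odflt 0%N (omap val (T (i, j))))%N]].
    by move=> i j; move/forallP: (h i) => /(_ j).
  split.
  - move=> [i j] /=; rewrite ffunE o2s_ne0; case/and4P: (H i j) => a b _ _.
    case d: (in_diag lam i j); first by move: a; rewrite d.
    by move: b; rewrite d /= => /eqP ->.
  - move=> i j j' x y e dj; rewrite !ffunE !mem_o2s => /eqP xe /eqP ye.
    case/and4P: (H i j) => _ _ /forallP /(_ j') c _.
    by move: c; rewrite e eqxx dj xe ye.
  - move=> i i' j x y e dj; rewrite !ffunE !mem_o2s => /eqP xe /eqP ye.
    case/and4P: (H i j) => _ _ _ /forallP /(_ i') c.
    by move: c; rewrite e eqxx dj xe ye.
  - by move=> c x _; apply: ltn_ord.
  - by move=> _ c; rewrite ffunE; case: (T c) => [y|] /=; rewrite ?cards1 ?cards0.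
move=> vT.
have someP : forall c : 'I_n * 'I_(ncols lam), in_diag lam c.1 c.2 -> exists x, T c = Some x.
  move=> c; rewrite -(vdiag vT c) ffunE o2s_ne0.
  by case: (T c) => [x|] // _; exists x.
apply/forallP => i; apply/forallP => j; apply/and4P; split.
- by apply/implyP => d; have := vdiag vT (i, j); rewrite /= d ffunE o2s_ne0.
- apply/implyP => nd; have := vdiag vT (i, j); rewrite /= (negbTE nd) ffunE o2s_ne0.
  by move/negbFE.
- apply/forallP => j'; apply/implyP => /andP [/eqP e dj].
  have dj' : in_diag lam (i, j').1 (i, j').2 by move: dj; rewrite !in_diagP /= -e; lia.
  have [x xe] := someP _ dj'; have [y ye] := someP (i, j) dj.
  rewrite xe ye /=; apply: (vrow vT e dj); by rewrite ffunE mem_o2s ?xe ?ye.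
- apply/forallP => i'; apply/implyP => /andP [/eqP e dj].
  have dj' : in_diag lam (i', j).1 (i', j).2.
    by move: dj; rewrite !in_diagP /= -e; have := pl i'; lia.
  have [x xe] := someP _ dj'; have [y ye] := someP (i, j) dj.
  rewrite xe ye /=; apply: (vcol vT e dj); by rewrite ffunE mem_o2s ?xe ?ye.
Qed.

Lemma card_sst n (lam : seq nat) : part lam ->
  #|SST lam n| = #|SVTg n (ncols lam) false lam n|.
Proof.
move=> pl.
have -> : SVTg n (ncols lam) false lam n = @Phi n (ncols lam) @: SST lam n.
  apply/setP => S; rewrite inE; apply/idP/imsetP.
    move=> Sv; have vS := elimT (validP _ _ _ _) Sv.
    pose T : {ffun 'I_n * 'I_(ncols lam) -> option 'I_n} := [ffun c => [pick x in S c]].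
    have PT : Phi T = S.
      apply/ffunP => c; rewrite !ffunE; case: pickP => [x xin|none] /=.
        apply/eqP; rewrite eqEcard sub1set xin cards1.
        exact: (vsing vS isT c).
      by apply/setP => y; rewrite inE none.
    by exists T; rewrite ?PT // inE sst_eq // PT.
  by case=> T; rewrite inE sst_eq // => h ->.
rewrite card_in_imset // => T1 T2 _ _ e; apply/ffunP => c.
have : Phi T1 c = Phi T2 c by rewrite e.
rewrite !ffunE.
case: (T1 c) => [x|]; case: (T2 c) => [y|] //=.
- by move/set1_inj ->.
- by move/setP/(_ x); rewrite !inE eqxx.
- by move/setP/(_ y); rewrite !inE eqxx.
Qed.

Local Close Scope ring_scope.
Local Open Scope ring_scope.

Lemma G_false i y j : G false i y j = 'C(y, j)%:R.
Proof.
rewrite /G big_ord_recl /= expr0 bin0 addn0 !mul1r big1 ?addr0 // => k _.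
by rewrite expr0n /= !mul0r.
Qed.

Lemma G_true n i y j : (i < n)%N ->
  G true i y j = \sum_(k < n) 'C(i, k)%:R * 'C(y + k, j)%:R.
Proof.
move=> iN; rewrite /G.
rewrite (big_ord_widen n (fun k => 1%:R ^+ k * 'C(i, k)%:R * 'C(y + k, j)%:R : rat)) //.
rewrite big_mkcond /=; apply: eq_bigr => k _.
rewrite expr1n mul1r; case: ltnP => // ik.
by rewrite bin_small // mul0r.
Qed.

Definition V n (y : 'I_n -> nat) : rat :=
  \prod_(i < n) \prod_(j < n | (i < j)%N) ((y j)%:R - (y i)%:R).

Lemma AijE (lam : seq nat) (i j : nat) :
  Aij lam i j = (nth 0%N lam i)%:R - (nth 0%N lam j)%:R + j%:R - i%:R.
Proof. by rewrite /Aij !rmorphD !rmorphN /= !pmulrn. Qed.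

Lemma termE n (lam : seq nat) (K : 'I_n -> nat) :
  let x := fun i : 'I_n => (nth 0%N lam i + (n - i.+1))%N in
  holman_term lam n K = V (fun i => x i + K i)%N / V x * \prod_(i < n) 'C(i, K i)%:R.
Proof.
move=> x; rewrite /holman_term; congr (_ * _); last first.
  by apply: eq_bigr => i _; rewrite pochE.
rewrite /V -prodf_div; apply: eq_bigr => i _; rewrite -prodf_div.
apply: eq_bigr => j ij; rewrite AijE /x !natrD !natrB ?ltn_ord //.
rewrite -[X in X / _ = _]opprK -[X in _ / X = _]opprK invrN mulrNN.
congr (_ / _); ring.
Qed.

Lemma V_neq0 n (lam : seq nat) : part lam ->
  V (fun i : 'I_n => (nth 0%N lam i + (n - i.+1))%N) != 0.
Proof.
move=> pl; apply/prodf_neq0 => i _; apply/prodf_neq0 => j ij.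
rewrite subr_eq0 eqr_nat; apply/eqP => e.
have := part_mono pl (ltnW ij); have := ltn_ord j; have := ltn_ord i; lia.
Qed.

Theorem corollary3p8 (n : nat) (lam : seq nat) :
  (0 < n)%N -> size lam = n -> sorted geq lam ->
  ((#|SVT lam n|)%:R = (#|SST lam n|)%:R * holman_sum lam n :> rat)%R.
Proof.
move=> n0 sz srt.
have pl := part_of_sorted srt.
have l0C : (nth 0 lam 0 <= ncols lam)%N by case: lam {sz srt pl}.
have lz : forall i, (n <= i)%N -> nth 0 lam i = 0%N by move=> i h; rewrite nth_default // sz.
have E1 : #|SVT lam n| = #|SVTg n (ncols lam) true lam n|.
  by apply: eq_card => T; rewrite !inE svt_eq.
rewrite E1 card_sst // !(count_svt _ (leqnn n) pl l0C lz).
set x := fun i : 'I_n => (nth 0%N lam i + (n - i.+1))%N.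
have [c Hc] := det_binom n.
have -> : \det (\matrix_(i < n, j < n) G false i (nth 0%N lam i + (n - i.+1)) j) = c * V x.
  by rewrite -Hc; congr (\det _); apply/matrixP => i j; rewrite !mxE G_false.
have -> : \det (\matrix_(i < n, j < n) G true i (nth 0%N lam i + (n - i.+1)) j) =
   \sum_(K : {ffun 'I_n -> 'I_n}) (\prod_(i < n) 'C(i, K i)%:R) * (c * V (fun i => x i + K i)%N).
  transitivity (\det (\matrix_(i < n, j < n) \sum_(k < n) ('C(i, k)%:R * 'C(x i + k, j)%:R : rat))).
    by congr (\det _); apply/matrixP => i j; rewrite !mxE (G_true _ _ (ltn_ord i)).
  rewrite (det_sum_rows (fun _ _ => true) (fun i (k : 'I_n) j => 'C(i, k)%:R * 'C(x i + k, j)%:R)).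
  rewrite (eq_bigl xpredT); last by move=> K; apply/familyP.
  apply: eq_bigr => K _; rewrite det_scale_rowsF; congr (_ * _).
  by rewrite -Hc.
rewrite /holman_sum -mulrA; congr (_ * _).
rewrite mulr_sumr; apply: eq_bigr => K _.
rewrite (termE lam (fun i => (K i : nat))) -/x.
have := V_neq0 n pl; rewrite -/x => nz.
by field.
Qed.
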